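(* Let $\widehat{G}$ be a signed separable bigraph which contains no signed graph in $\mathcal{C}\cup D$ as an induced subgraph. Suppose that a vertex set $S$ minimally separates components $H$ and $H'$ of $\widehat G-S$. Then (i) $S$ induces a positive biclique in $\widehat{G}$, and (ii) any two vertices of $S$ in the same part of the bipartition of $\widehat{G}$ have a common neighbour in $H$ and a common neighbour in $H'$.
   Context: A signed graph is a finite simple graph each of whose edges is assigned a sign, positive or negative. A signed bigraph is a signed graph whose underlying graph is bipartite. A bigraph is separable if it contains an induced $2K_2$. An induced subgraph is obtained by deleting vertices only; $\widehat G$ contains $H$ as an induced subgraph if some induced subgraph is isomorphic to $H$ via a sign-preserving isomorphism. A signed graph is positive if all edges are positive and non-trivial if it has at least one edge. In a bigraph with bipartition $(X,Y)$, a subgraph $H$ is a biclique if every vertex of $V(H)\cap X$ is adjacent to every vertex of $V(H)\cap Y$. For a vertex set $S$ of $\widehat G$ and two distinct non-trivial connected components $H,H'$ of $\widehat G-S$, $S$ minimally separates $H$ and $H'$ if every vertex of $S$ has a neighbour in $H$ and a neighbour in $H'$. $\mathcal C$ is the set of all signed cycles of length $2k$ with $k\ge 3$ (all sign assignments). $D$ is the set of signed graphs on parts $\{a_1,a_2,a_3\}$, $\{b_1,b_2,b_3\}$ with edges exactly $a_1b_1,a_1b_2,a_2b_1,a_2b_2,a_2b_3,a_3b_2,a_3b_3$ (a 6-cycle $a_1b_1a_2b_3a_3b_2a_1$ plus the chord $a_2b_2$), where $a_2b_2$ is negative and the other six edges have arbitrary signs. *)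

(* Defs.v *)
From mathcomp Require Import all_boot.
Set Implicit Arguments. Unset Strict Implicit. Unset Printing Implicit Defensive.

(* A signed graph on a finite vertex type T: adjacency [adj] (symmetric,
   irreflexive) and a sign [sgn] (true = positive, false = negative),
   symmetric; only its values on edges matter. *)
Definition signed_graph (T : finType) (adj : rel T) (sgn : T -> T -> bool) :=
  (forall x, ~~ adj x x) /\ (forall x y, adj x y = adj y x) /\
  (forall x y, adj x y -> sgn x y = sgn y x).

Definition signed_bigraph (T : finType) (adj : rel T) (sgn : T -> T -> bool)
  (part : T -> bool) :=
  signed_graph adj sgn /\ (forall x y, adj x y -> part x != part y).

Definition induced_copy (U T : finType) (adjU : rel U) (sgnU : U -> U -> bool)
  (adj : rel T) (sgn : T -> T -> bool) (f : U -> T) :=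
  injective f /\
  (forall u v, adj (f u) (f v) = adjU u v) /\
  (forall u v, adjU u v -> sgn (f u) (f v) = sgnU u v).

Definition contains_induced (U T : finType) (adjU : rel U) (sgnU : U -> U -> bool)
  (adj : rel T) (sgn : T -> T -> bool) :=
  exists f : U -> T, induced_copy adjU sgnU adj sgn f.

(* The cycle C_n on 'I_n: i ~ i+1 (mod n); sigma i is the sign of edge {i, i+1}. *)
Definition cyc_adj (n : nat) : rel 'I_n :=
  fun u v => ((u.+1 %% n == v) || (v.+1 %% n == u)) && (u != v).
Definition cyc_sgn (n : nat) (sigma : 'I_n -> bool) (u v : 'I_n) : bool :=
  if u.+1 %% n == v then sigma u else sigma v.

(* The family D on vertices (false,i) = a_(i+1), (true,j) = b_(j+1):
   edges a_i b_j with |i - j| <= 1, i.e. a1b1,a1b2,a2b1,a2b2,a2b3,a3b2,a3b3.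
   tau i j is the sign of a_(i+1) b_(j+1); a2b2 must be negative. *)
Definition D_adj : rel (bool * 'I_3) :=
  fun u v => (u.1 != v.1) &&
    [|| nat_of_ord u.2 == v.2, u.2 == v.2.+1 :> nat | u.2.+1 == v.2 :> nat].
Definition D_sgn (tau : 'I_3 -> 'I_3 -> bool) (u v : bool * 'I_3) : bool :=
  if u.1 then tau v.2 u.2 else tau u.2 v.2.

Definition C_free (T : finType) (adj : rel T) (sgn : T -> T -> bool) :=
  forall (k : nat) (sigma : 'I_(2 * k) -> bool), 3 <= k ->
    ~ contains_induced (@cyc_adj (2 * k)) (cyc_sgn sigma) adj sgn.
Definition D_free (T : finType) (adj : rel T) (sgn : T -> T -> bool) :=
  forall tau : 'I_3 -> 'I_3 -> bool, tau (inord 1) (inord 1) = false ->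
    ~ contains_induced D_adj (D_sgn tau) adj sgn.

Definition separable (T : finType) (adj : rel T) :=
  exists a b c d : T, [/\ uniq [:: a; b; c; d], adj a b, adj c d &
    [/\ ~~ adj a c, ~~ adj a d, ~~ adj b c & ~~ adj b d]].

Definition adj_minus (T : finType) (adj : rel T) (S : {set T}) : rel T :=
  fun x y => [&& adj x y, x \notin S & y \notin S].

Definition component_of (T : finType) (adj : rel T) (S : {set T}) (H : {set T}) :=
  exists2 x, x \notin S & H = [set y | connect (adj_minus adj S) x y].

Definition nontrivial (T : finType) (adj : rel T) (H : {set T}) :=
  exists u, exists2 v, (u \in H) && (v \in H) & adj u v.

Definition minimally_separates (T : finType) (adj : rel T) (S H H' : {set T}) :=
  [/\ component_of adj S H, component_of adj S H', H != H',
      nontrivial adj H /\ nontrivial adj H' &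
      forall x, x \in S -> (exists2 y, y \in H & adj x y) /\
                           (exists2 y, y \in H' & adj x y)].

(* Main.v *)
Require Import Defs.
From mathcomp Require Import all_boot zify.
From Stdlib Require Import Classical.
Set Implicit Arguments. Unset Strict Implicit. Unset Printing Implicit Defensive.

Lemma modS_small n i : i < n -> i.+1 %% n = if i.+1 == n then 0 else i.+1.
Proof.
move=> lt; case: eqP => [->|ne]; first by rewrite modnn.
by rewrite modn_small //; lia.
Qed.

Lemma cyc_nat n i j : i < j -> j < n -> 2 < n ->
 ((if i.+1 == n then 0 else i.+1) == j) || ((if j.+1 == n then 0 else j.+1) == i) = (j == i.+1) || (i==0)&&(j==n.-1).
Proof. move=> *. do 2 case: ifP => /eqP ?; lia. Qed.

Lemma cycle_contra (T : finType) (adj : rel T) (sgn : T -> T -> bool) k (f : nat -> T) :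
  3 <= k -> C_free adj sgn ->
  (forall x, ~~ adj x x) -> (forall x y, adj x y = adj y x) ->
  (forall x y, adj x y -> sgn x y = sgn y x) ->
  (forall i j, i < j -> j < 2*k -> f i != f j) ->
  (forall i j, i < j -> j < 2*k -> adj (f i) (f j) = (j == i.+1) || ((i == 0) && (j == (2*k).-1))) ->
  False.
Proof.
move=> k3 HC irr sym ssym inj Hadj.
set n := 2 * k in inj Hadj.
pose sigma := fun i : 'I_n => sgn (f i) (f (i.+1 %% n)).
apply: (HC k sigma k3).
have Hadj2 : forall u v : 'I_n, adj (f u) (f v) = cyc_adj u v.
  move=> u v; rewrite /cyc_adj !modS_small //.
  case: (ltngtP u v) => [uv|vu|uv].
  - rewrite Hadj // -cyc_nat //; last by rewrite /n; lia.
    have -> : (u != v) = true by apply/negP => /eqP E; move: uv; rewrite E ltnn.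
    by rewrite andbT.
  - rewrite sym Hadj // -cyc_nat //; last by rewrite /n; lia.
    rewrite [X in _ = X && _]orbC.
    have -> : (u != v) = true by apply/negP => /eqP E; move: vu; rewrite E ltnn.
    by rewrite andbT.
  - have E : u = v by apply: val_inj.
    by rewrite E eqxx andbF (negbTE (irr _)).
exists (fun i : 'I_n => f i); split; [|split].
- move=> u v E; apply: val_inj => /=.
  case: (ltngtP u v) => [uv|vu|//].
  + by move: (inj _ _ uv (ltn_ord v)); rewrite E eqxx.
  + by move: (inj _ _ vu (ltn_ord u)); rewrite E eqxx.
- exact: Hadj2.
- move=> u v Huv; rewrite /cyc_sgn /sigma.
  case: eqP => [E|NE].
  + by rewrite E.
  + have E2 : v.+1 %% n = u.
      move: Huv; rewrite /cyc_adj => /andP [/orP [/eqP ?|/eqP //] _]; by [].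
    rewrite E2 ssym // Hadj2 /cyc_adj.
    by move: Huv; rewrite /cyc_adj => /andP [/orP [->|->] /=]; rewrite ?orbT eq_sym.
Qed.

Lemma path_notin (T : finType) (adj : rel T) (S : {set T}) a p :
  a \notin S -> path (adj_minus adj S) a p -> last a p \notin S.
Proof.
elim: p a => [//|b p IH] a Ha /= /andP [Hab Hp].
apply: IH Hp; by case/and3P: Hab.
Qed.

Lemma comp_notin (T : finType) (adj : rel T) (S H : {set T}) u :
  component_of adj S H -> u \in H -> u \notin S.
Proof.
rewrite /component_of => -[x0 Hx0 ->]; rewrite inE => /connectP [p Hp ->].
by apply: (path_notin Hx0 Hp).
Qed.

Lemma comp_closed (T : finType) (adj : rel T) (S H : {set T}) u v :
  component_of adj S H -> u \in H -> v \notin S -> adj u v -> v \in H.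
Proof.
move=> HH uH vS auv; have uS := comp_notin HH uH.
move: HH uH => [x0 Hx0 E]; rewrite E !inE => Hu.
apply: (connect_trans Hu); apply: connect1; by rewrite /adj_minus auv uS vS.
Qed.

Lemma adj_minus_sym (T : finType) (adj : rel T) (S : {set T}) :
  (forall x y, adj x y = adj y x) -> symmetric (adj_minus adj S).
Proof. by move=> sym x y; rewrite /adj_minus sym andbCA andbA [(y \notin S) && _]andbC -andbA andbCA. Qed.

Lemma comp_conn (T : finType) (adj : rel T) (S H : {set T}) u v :
  (forall x y, adj x y = adj y x) ->
  component_of adj S H -> u \in H -> v \in H -> connect (adj_minus adj S) u v.
Proof.
rewrite /component_of => sym [x0 Hx0 ->]; rewrite !inE => Hu Hv.
apply: connect_trans Hv; by rewrite sym_connect_sym //; apply: adj_minus_sym.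
Qed.

Lemma comp_eq (T : finType) (adj : rel T) (S H H' : {set T}) u :
  (forall x y, adj x y = adj y x) ->
  component_of adj S H -> component_of adj S H' -> u \in H -> u \in H' -> H = H'.
Proof.
move=> sym HH HH' uH uH'.
apply/setP => w; apply/idP/idP => Hw.
- move: (HH') => [x0 _ E]; rewrite E inE; move: uH'; rewrite E inE => H1.
  apply: connect_trans H1 _; exact: (comp_conn sym HH).
- move: (HH) => [x0 _ E]; rewrite E inE; move: uH; rewrite E inE => H1.
  apply: connect_trans H1 _; exact: (comp_conn sym HH').
Qed.

Lemma comp_sep (T : finType) (adj : rel T) (S H H' : {set T}) u v :
  (forall x y, adj x y = adj y x) ->
  component_of adj S H -> component_of adj S H' -> H != H' ->
  u \in H -> v \in H' -> adj u v -> False.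
Proof.
move=> sym HH HH' ne uH vH' auv.
have vH : v \in H := comp_closed HH uH (comp_notin HH' vH') auv.
by move: ne; rewrite (comp_eq sym HH HH' vH vH') eqxx.
Qed.

Lemma comp_disj (T : finType) (adj : rel T) (S H H' : {set T}) u :
  (forall x y, adj x y = adj y x) ->
  component_of adj S H -> component_of adj S H' -> H != H' ->
  u \in H -> u \in H' -> False.
Proof.
move=> sym HH HH' ne uH uH'.
by move: ne; rewrite (comp_eq sym HH HH' uH uH') eqxx.
Qed.

Definition walk (T : finType) (adj : rel T) (H : {set T}) x y m (p : nat -> T) :=
  [/\ p 0 = x, p m = y, 2 <= m, (forall i, 0 < i < m -> p i \in H) &
      (forall i, i < m -> adj (p i) (p i.+1))].

Lemma shortcut (T : finType) (adj : rel T) (H : {set T}) x y m p i d :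
  walk adj H x y m p -> i + d < m -> adj (p i) (p (i+d).+1) -> 2 <= m - d ->
  walk adj H x y (m - d) (fun k => if k <= i then p k else p (k + d)).
Proof.
move=> [p0 pm m2 pin padj] lt aid md; split => //.
- case: leqP => ?; first lia. by have -> : m - d + d = m by lia.
- move=> k /andP [k0 km]; case: leqP => ?.
  + apply: pin; lia.
  + apply: pin; lia.
- move=> k km; case: (ltngtP k i) => ki.
  + apply: padj; lia.
  +
    have -> : k.+1 + d = (k + d).+1 by lia. apply: padj; lia.
  + subst k. by have -> : i.+1 + d = (i+d).+1 by lia.
Qed.

Lemma min_walk (T : finType) (adj : rel T) (H : {set T}) x y m p :
  walk adj H x y m p -> exists m0 p0, walk adj H x y m0 p0 /\
     forall m1 p1, m1 < m0 -> ~ walk adj H x y m1 p1.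
Proof.
elim: m {-2}m (leqnn m) p => [|n IH] m Hm p W.
- by case: W => _ _ ? _ _; lia.
- destruct (classic (exists m1 p1, m1 < m /\ walk adj H x y m1 p1)) as [[m1 [p1 [lt W1]]]|NE].
  + apply: (IH m1 _ p1 W1); lia.
  + exists m, p; split => // m1 p1 lt W1; apply: NE; by exists m1, p1.
Qed.

Lemma walk_part (T : finType) (adj : rel T) (part : T -> bool) (H : {set T}) x y m p :
  (forall u v, adj u v -> part u != part v) ->
  walk adj H x y m p -> forall i, i <= m -> part (p i) = part x (+) odd i.
Proof.
move=> bip [p0 _ _ _ padj]; elim => [|i IH] lt; first by rewrite p0 addbF.
have := bip _ _ (padj i lt); rewrite IH; last lia.
by rewrite /= addbN; case: (part (p i.+1)); case: (_ (+) _).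
Qed.

Lemma good_walk (T : finType) (adj : rel T) (S H : {set T}) x y m p :
  x \in S -> y \in S -> x != y -> component_of adj S H ->
  walk adj H x y m p -> (forall m1 p1, m1 < m -> ~ walk adj H x y m1 p1) ->
  (forall i j, i < j -> j <= m -> p i != p j) /\
  (forall i j, i < j -> j <= m -> (0 < i) || (j < m) -> adj (p i) (p j) = (j == i.+1)).
Proof.
move=> xS yS xy HH W Hmin; have W' := W; case: W' => [p0 pm m2 pin padj].
have notH : forall u, u \in S -> u \in H -> False.
  by move=> u uS uH; move: (comp_notin HH uH); rewrite uS.
split.
- move=> i j ij jm; apply/negP => /eqP E.
  case: (posnP i) => [i0|ipos].
  + subst i; rewrite p0 in E.
    case: (ltngtP j m) => [jlt|jgt|jeq]; [|lia|].
    * apply: (notH x xS); rewrite E; apply: pin; lia.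
    * by move: xy; rewrite E jeq pm eqxx.
  + case: (ltngtP j m) => [jlt|jgt|jeq]; [|lia|].
    * apply: (Hmin (m - (j - i))); first lia.
      apply: (shortcut (i:=i) W); try lia.
      have -> : (i + (j - i)).+1 = j.+1 by lia.
      by rewrite E; apply: padj.
    * apply: (notH y yS); rewrite -pm -jeq -E; apply: pin; lia.
- move=> i j ij jm ijm.
  case: (ltngtP j i.+1) => [?|jgt|->]; first lia; last by rewrite padj //; lia.
  apply/negP => A.
  apply: (Hmin (m - (j - i.+1))); first lia.
  apply: (shortcut (i:=i) W); try lia.
  by have -> : (i + (j - i.+1)).+1 = j by lia.
Qed.

Lemma conn_in (T : finType) (adj : rel T) (S H : {set T}) a v :
  component_of adj S H -> a \in H -> connect (adj_minus adj S) a v -> v \in H.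
Proof.
rewrite /component_of => -[x0 _ ->]; rewrite !inE => Ha Hv.
exact: connect_trans Ha Hv.
Qed.

Lemma exists_walk (T : finType) (adj : rel T) (S H : {set T}) x y a b :
  (forall x y, adj x y = adj y x) -> component_of adj S H ->
  a \in H -> adj x a -> b \in H -> adj y b ->
  exists m p, walk adj H x y m p.
Proof.
move=> sym HH aH xa bH yb.
have /connectP [s Hs Eb] := comp_conn sym HH aH bH.
exists (size s).+2, (fun i => nth y [:: x, a & s] i); split => //.
- by rewrite nth_default.
- case=> [//|i] /andP [_ lt] /=.
  apply: (conn_in HH aH); apply: (path_connect Hs); apply: mem_nth; by [].
- case=> [|i] lt /=; first by [].
  case: (ltngtP i (size s)) => [il|ig|ie].
  + by move/pathP: Hs => /(_ y i il) /andP [].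
  + lia.
  + subst i; rewrite (nth_default y (leqnn _)).
    have := nth_last y (a :: s); rewrite /= => ->; by rewrite -Eb sym.
Qed.

Lemma chordless (T : finType) (adj : rel T) (part : T -> bool) (S H : {set T}) x y :
  (forall x y, adj x y = adj y x) -> (forall u v, adj u v -> part u != part v) ->
  component_of adj S H -> x \in S -> y \in S -> x != y ->
  (exists2 a, a \in H & adj x a) -> (exists2 b, b \in H & adj y b) ->
  exists m p, [/\ walk adj H x y m p,
    (forall i j, i < j -> j <= m -> p i != p j),
    (forall i j, i < j -> j <= m -> (0 < i) || (j < m) -> adj (p i) (p j) = (j == i.+1)) &
    odd m = (part x != part y)].
Proof.
move=> sym bip HH xS yS xy [a aH xa] [b bH yb].
have [m0 [p0 W0]] := exists_walk sym HH aH xa bH yb.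
have [m [p [W Hmin]]] := min_walk W0.
have [inj ch] := good_walk xS yS xy HH W Hmin.
exists m, p; split => //.
have := walk_part bip W (leqnn m); case: W => _ -> _ _ _ ->.
by case: (part x); case: (odd m).
Qed.

Lemma two_paths (T : finType) (adj : rel T) (sgn : T -> T -> bool) (S H H' : {set T})
    x y m p m' q :
  C_free adj sgn -> (forall x, ~~ adj x x) -> (forall x y, adj x y = adj y x) ->
  (forall x y, adj x y -> sgn x y = sgn y x) ->
  component_of adj S H -> component_of adj S H' -> H != H' ->
  x \in S -> y \in S -> ~~ adj x y ->
  walk adj H x y m p -> walk adj H' x y m' q ->
  (forall i j, i < j -> j <= m -> p i != p j) ->
  (forall i j, i < j -> j <= m' -> q i != q j) ->
  (forall i j, i < j -> j <= m -> (0 < i) || (j < m) -> adj (p i) (p j) = (j == i.+1)) ->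
  (forall i j, i < j -> j <= m' -> (0 < i) || (j < m') -> adj (q i) (q j) = (j == i.+1)) ->
  ~~ odd (m + m') -> 6 <= m + m' -> False.
Proof.
move=> HC irr sym ssym HH HH' ne xS yS nxy [p0 pm m2 pin _] [q0 qm m2' qin _]
  pinj qinj pch qch ev n6.
have pc : forall i j, i < j -> j <= m -> adj (p i) (p j) = (j == i.+1).
  move=> i j ij jm; case: (boolP ((0 < i) || (j < m))) => h; first exact: pch.
  have [-> ->] : i = 0 /\ j = m by lia.
  by rewrite p0 pm (negbTE nxy); lia.
have qc : forall i j, i < j -> j <= m' -> adj (q i) (q j) = (j == i.+1).
  move=> i j ij jm; case: (boolP ((0 < i) || (j < m'))) => h; first exact: qch.
  have [-> ->] : i = 0 /\ j = m' by lia.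
  by rewrite q0 qm (negbTE nxy); lia.
have notS : forall u, u \in S -> u \in H' -> False.
  by move=> u uS uH; move: (comp_notin HH' uH); rewrite uS.
set n := m + m' in ev n6.
have e : 2 * n./2 = n.
  by rewrite -[RHS]odd_double_half (negbTE ev) add0n -mul2n.
pose F := fun i => if i <= m then p i else q (n - i).
have fL i : i <= m -> F i = p i by move=> h; rewrite /F h.
have fR i : m < i -> F i = q (n - i) by move=> h; rewrite /F leqNgt h.
apply: (@cycle_contra T adj sgn (n./2) F) => //; first lia; rewrite e.
- move=> i j ij jn; case: (leqP j m) => jm.
  + rewrite (fL i) ?(fL j); try lia. apply: pinj; lia.
  + rewrite (fR j) //; case: (leqP i m) => im.
    * rewrite fL //; apply/eqP => E.
      have qH : q (n - j) \in H' by apply: qin; lia.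
      rewrite -E in qH.
      case: (posnP i) => [i0|ip]; first by subst i; rewrite p0 in qH; exact: notS xS qH.
      case: (ltngtP i m) => [il|ig|ie]; last by rewrite ie pm in qH; exact: notS yS qH.
      -- apply: (comp_disj sym HH HH' ne _ qH); apply: pin; lia.
      -- lia.
    * rewrite fR //; rewrite eq_sym; apply: qinj; lia.
- move=> i j ij jn; case: (leqP j m) => jm.
  + rewrite (fL i) ?(fL j) ?pc; try lia.
  + rewrite (fR j) //; case: (leqP i m) => im.
    * rewrite fL //; case: (posnP i) => [i0|ip].
      -- subst i; rewrite p0 -q0 qc; lia.
      -- case: (ltngtP i m) => [il|ig|ie].
         ++ have -> : adj (p i) (q (n - j)) = false.
              apply/negP => A; apply: (comp_sep sym HH HH' ne _ _ A).
              apply: pin; lia. apply: qin; lia.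
            lia.
         ++ lia.
         ++ subst i; rewrite pm -qm sym qc; lia.
    * rewrite fR // sym qc; lia.
Qed.

Lemma one_path (T : finType) (adj : rel T) (sgn : T -> T -> bool) (H : {set T}) x y m p :
  C_free adj sgn -> (forall x, ~~ adj x x) -> (forall x y, adj x y = adj y x) ->
  (forall x y, adj x y -> sgn x y = sgn y x) -> adj x y ->
  walk adj H x y m p ->
  (forall i j, i < j -> j <= m -> p i != p j) ->
  (forall i j, i < j -> j <= m -> (0 < i) || (j < m) -> adj (p i) (p j) = (j == i.+1)) ->
  odd m -> 5 <= m -> False.
Proof.
move=> HC irr sym ssym axy [p0 pm m2 pin _] pinj pch od m5.
have e : 2 * (m.+1)./2 = m.+1.
  by rewrite -[RHS]odd_double_half /= od add0n -mul2n.
apply: (@cycle_contra T adj sgn ((m.+1)./2) p) => //; first lia; rewrite e.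
- move=> i j ij jn; apply: pinj; lia.
- move=> i j ij jn; case: (boolP ((0 < i) || (j < m))) => h.
  + rewrite pch; lia.
  + have [-> ->] : i = 0 /\ j = m by lia.
    rewrite p0 pm axy; lia.
Qed.

Lemma D_nbr' (u v : bool * 'I_3) : (forall w, D_adj u w = D_adj v w) -> u = v.
Proof.
move=> H; apply/eqP.
have W := fun b k (Hk : k < 3) => H (b, Ordinal Hk).
move: (W false 0 isT) (W false 1 isT) (W false 2 isT) (W true 0 isT) (W true 1 isT) (W true 2 isT).
by clear W H; move: u v; do 2!case=> [[] [[|[|[|?]]] ?]].
Qed.

Lemma D_contra (T : finType) (adj : rel T) (sgn : T -> T -> bool) (S H H' : {set T})
    x y p q :
  D_free adj sgn -> (forall x, ~~ adj x x) -> (forall x y, adj x y = adj y x) ->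
  (forall x y, adj x y -> sgn x y = sgn y x) ->
  component_of adj S H -> component_of adj S H' -> H != H' ->
  adj x y -> sgn x y = false ->
  walk adj H x y 3 p -> walk adj H' x y 3 q ->
  (forall i j, i < j -> j <= 3 -> (0 < i) || (j < 3) -> adj (p i) (p j) = (j == i.+1)) ->
  (forall i j, i < j -> j <= 3 -> (0 < i) || (j < 3) -> adj (q i) (q j) = (j == i.+1)) ->
  False.
Proof.
move=> HD irr sym ssym HH HH' ne axy sxy [p0 pm _ pin _] [q0 qm _ qin _] pch qch.
have irr' z : adj z z = false by apply: negbTE.
have cr : forall i j, 0 < i < 3 -> 0 < j < 3 -> adj (p i) (q j) = false.
  move=> i j hi hj; apply/negP => A; exact: (comp_sep sym HH HH' ne (pin i hi) (qin j hj) A).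
have e1 : adj (p 2) (p 1) = true by rewrite sym pch.
have e2 : adj (p 2) y = true by rewrite -pm pch.
have e3 : adj x (p 1) = true by rewrite -p0 pch.
have e4 : adj x (q 1) = true by rewrite -q0 qch.
have e5 : adj (q 2) y = true by rewrite -qm qch.
have e6 : adj (q 2) (q 1) = true by rewrite sym qch.
have e7 : adj (p 2) (q 1) = false by rewrite cr.
have e8 : adj (q 2) (p 1) = false by rewrite sym cr.
have e9 : adj (p 2) x = false by rewrite -p0 sym pch.
have e10 : adj (p 2) (q 2) = false by rewrite cr.
have e11 : adj x (q 2) = false by rewrite -q0 qch.
have e12 : adj (p 1) y = false by rewrite -pm pch.
have e13 : adj (p 1) (q 1) = false by rewrite cr.
have e14 : adj y (q 1) = false by rewrite -qm sym qch.
pose g := fun u : bool * 'I_3 =>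
  if u.1 then (if nat_of_ord u.2 == 0 then p 1 else if nat_of_ord u.2 == 1 then y else q 1)
  else (if nat_of_ord u.2 == 0 then p 2 else if nat_of_ord u.2 == 1 then x else q 2).
have Hadj : forall u v, adj (g u) (g v) = D_adj u v.
  move=> u v; move: u v; do 2!case=> [[] [[|[|[|?]]] ?]] //=;
  rewrite ?irr' ?axy ?e1 ?e2 ?e3 ?e4 ?e5 ?e6 ?e7 ?e8 ?e9 ?e10 ?e11 ?e12 ?e13 ?e14 //;
  rewrite sym ?axy ?e1 ?e2 ?e3 ?e4 ?e5 ?e6 ?e7 ?e8 ?e9 ?e10 ?e11 ?e12 ?e13 ?e14 //.
pose tau := fun i j : 'I_3 => sgn (g (false, i)) (g (true, j)).
apply: (HD tau).
  by rewrite /tau /g /= inordK.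
exists g; split; [|split].
- move=> u v E; apply: D_nbr' => w; by rewrite -!Hadj E.
- exact: Hadj.
- case=> [[] i] [[] j] A; rewrite /D_sgn /tau //=.
  by rewrite ssym // Hadj.
Qed.

Lemma odd_ge3 m : odd m -> 2 <= m -> 3 <= m.
Proof. by case: m => [|[|[|m]]]. Qed.
Lemma even_ge4 m : ~~ odd m -> 2 <= m -> m != 2 -> 4 <= m.
Proof. by case: m => [|[|[|[|m]]]]. Qed.
Lemma odd_ge5 m : odd m -> 3 <= m -> m != 3 -> 5 <= m.
Proof. by case: m => [|[|[|[|[|m]]]]]. Qed.

Theorem lemma4p1 (T : finType) (adj : rel T) (sgn : T -> T -> bool)
  (part : T -> bool) (S H H' : {set T}) :
  signed_bigraph adj sgn part ->
  separable adj ->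
  C_free adj sgn ->
  D_free adj sgn ->
  minimally_separates adj S H H' ->
  (* (i) S induces a positive biclique *)
  (forall x y, x \in S -> y \in S -> part x != part y -> adj x y && sgn x y) /\
  (* (ii) same-part vertices of S have common neighbours in H and in H' *)
  (forall x y, x \in S -> y \in S -> x != y -> part x = part y ->
     (exists2 z, z \in H & adj x z && adj y z) /\
     (exists2 z, z \in H' & adj x z && adj y z)).
Proof.
move=> [[irr [sym ssym]] bip] _ HC HD [HH HH' ne _ nbr].
have ne' : H' != H by rewrite eq_sym.
split.
- move=> x y xS yS pxy.
  have xy : x != y by apply: contraNneq pxy => ->.
  have [m [p [Wp pinj pch podd]]] :=
    chordless sym bip HH xS yS xy (nbr x xS).1 (nbr y yS).1.
  have [m' [q [Wq qinj qch qodd]]] :=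
    chordless sym bip HH' xS yS xy (nbr x xS).2 (nbr y yS).2.
  rewrite pxy in podd qodd.
  have m3 : 3 <= m by apply: odd_ge3 => //; case: Wp.
  have m3' : 3 <= m' by apply: odd_ge3 => //; case: Wq.
  case: (boolP (adj x y)) => axy; last first.
    exfalso; apply: (two_paths HC irr sym ssym HH HH' ne xS yS axy Wp Wq) => //.
    + by rewrite oddD podd qodd.
    + lia.
  rewrite /=.
  have em : m = 3.
    apply/eqP; apply/negP => /negP nm.
    exact: (one_path HC irr sym ssym axy Wp pinj pch podd (odd_ge5 podd m3 nm)).
  have em' : m' = 3.
    apply/eqP; apply/negP => /negP nm.
    exact: (one_path HC irr sym ssym axy Wq qinj qch qodd (odd_ge5 qodd m3' nm)).
  subst m m'.
  case: (boolP (sgn x y)) => // /negbTE sxy; exfalso.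
  exact: (D_contra HD irr sym ssym HH HH' ne axy sxy Wp Wq pch qch).
- move=> x y xS yS xy pxy.
  have nxy : ~~ adj x y by apply/negP => /bip; rewrite pxy eqxx.
  have [m [p [Wp pinj pch podd]]] :=
    chordless sym bip HH xS yS xy (nbr x xS).1 (nbr y yS).1.
  have [m' [q [Wq qinj qch qodd]]] :=
    chordless sym bip HH' xS yS xy (nbr x xS).2 (nbr y yS).2.
  rewrite pxy eqxx in podd qodd.
  have m2 : 2 <= m by case: Wp.
  have m2' : 2 <= m' by case: Wq.
  split.
  + case: (eqVneq m 2) => [em|nm].
    * subst m; case: Wp => p0 pm _ pin padj.
      exists (p 1); first by apply: pin.
      by rewrite -{1}p0 padj // -pm sym padj.
    * exfalso; apply: (two_paths HC irr sym ssym HH HH' ne xS yS nxy Wp Wq) => //.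
      -- by rewrite oddD podd qodd.
      -- have := even_ge4 (negbT podd) m2 nm; lia.
  + case: (eqVneq m' 2) => [em|nm].
    * subst m'; case: Wq => p0 pm _ pin padj.
      exists (q 1); first by apply: pin.
      by rewrite -{1}p0 padj // -pm sym padj.
    * exfalso; apply: (two_paths HC irr sym ssym HH' HH ne' xS yS nxy Wq Wp) => //.
      -- by rewrite oddD podd qodd.
      -- have := even_ge4 (negbT qodd) m2' nm; lia.
Qed.
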